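(* Let $\vec\Sigma$ be a finite sequence of finite connected tight labeled core graphs over $\mathcal B$ and let $\alpha$ be an elementary Whitehead automorphism with distinguished label $b$. Let $e$ be an edge of $\vec\Sigma$ with label $c\notin\{b,b^{-1}\}$ and let $e'$ be the image in $\mathrm{tight}(\alpha\vec\Sigma)$ of the unique subedge of $\alpha(e)$ labeled $c$. Then $e'$ lies in $\alpha_\#\vec\Sigma=\mathrm{core}(\mathrm{tight}(\alpha\vec\Sigma))$. Consequently $e\mapsto e'$ is a bijection between the edges of $\vec\Sigma$ not labeled $b^{\pm1}$ and the edges of $\alpha_\#\vec\Sigma$ not labeled $b^{\pm1}$.
   Context: $F(\mathcal B)$ is the free group on the finite set $\mathcal B$. A labeled graph assigns labels in $\mathcal B^{\pm1}$ to oriented edges, $e^{-1}$ carrying the inverse label; it is tight if distinct oriented edges with the same initial vertex have distinct labels. The core of a graph is the union of all edges crossed by immersed loops (cyclically reduced closed edge paths); a core graph equals its core. $\mathrm{tight}(\Sigma)$ is the result of iteratively folding (identifying two distinct oriented edges with common initial vertex and equal labels) until tight, with quotient map $\Sigma\to\mathrm{tight}(\Sigma)$. For $\alpha\in\mathrm{Aut}(F(\mathcal B))$, $\alpha\Sigma$ replaces each oriented edge labeled $c$ by a path spelling the reduced word $\alpha(c)$. Operations on sequences are componentwise. An elementary Whitehead automorphism is either induced by a permutation $\pi$ of $\mathcal B^{\pm1}$ with $\pi(c^{-1})=\pi(c)^{-1}$, or is determined by $b\in\mathcal B^{\pm1}$ (the distinguished label) and $A\subset\mathcal B^{\pm1}\setminus\{b^{\pm1}\}$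 via $\alpha(b)=b$, $\alpha(c)=b^{\epsilon(c)}\,c\,b^{-\epsilon(c^{-1})}$ for $c\neq b^{\pm1}$, where $\epsilon(x)=1$ if $x\in A$ and $0$ otherwise. *)

(* Defs.v *)
From Stdlib Require Import Relations.
From HB Require Import structures.
From mathcomp Require Import all_boot.
Set Implicit Arguments. Unset Strict Implicit. Unset Printing Implicit Defensive.

(* Labels in B^{+-1}: (x, true) is x, (x, false) is x^{-1}. *)
Definition label (B : finType) := (B * bool)%type.
Definition flip (B : finType) (c : label B) : label B := (c.1, ~~ c.2).
Lemma flipK (B : finType) : involutive (@flip B).
Proof. by case=> x s; rewrite /flip /= negbK. Qed.

Record graph (B : finType) := Graph {
  V : finType;
  E : finType;
  src : E -> V;
  inv : E -> E;
  lab : E -> label B;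
  invK : involutive inv;
  inv_neq : forall e, inv e != e;
  lab_inv : forall e, lab (inv e) = flip (lab e) }.

Arguments src {B} g _ : rename.
Arguments inv {B} g _ : rename.
Arguments lab {B} g _ : rename.
Arguments V {B} g : rename.
Arguments E {B} g : rename.
Definition tgt (B : finType) (G : graph B) (e : E G) : V G := src G (inv G e).
Arguments tgt {B} G e.

(* A quotient of G (obtained by folding) is recorded by equivalence relations
   on the vertices and oriented edges of G. *)
Record fstate (B : finType) (G : graph B) := FState {
  VR : V G -> V G -> Prop;
  ER : E G -> E G -> Prop }.

Definition init_state (B : finType) (G : graph B) : fstate G :=
  FState (@eq (V G)) (@eq (E G)).

Definition merge (T : Type) (R : T -> T -> Prop) (a b : T) : T -> T -> Prop :=
  fun x y => R x y \/ (R x a /\ R b y) \/ (R x b /\ R a y).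

Definition fold_at (B : finType) (G : graph B) (S : fstate G) (e1 e2 : E G) :
  fstate G :=
  FState (merge (VR S) (tgt G e1) (tgt G e2))
         (merge (merge (ER S) e1 e2) (inv G e1) (inv G e2)).

Inductive fold_step (B : finType) (G : graph B) : fstate G -> fstate G -> Prop :=
| FoldStep (S : fstate G) (e1 e2 : E G) :
    VR S (src G e1) (src G e2) -> lab G e1 = lab G e2 -> ~ ER S e1 e2 ->
    fold_step S (fold_at S e1 e2).

Definition is_tight_state (B : finType) (G : graph B) (S : fstate G) : Prop :=
  forall e1 e2 : E G, VR S (src G e1) (src G e2) -> lab G e1 = lab G e2 ->
    ER S e1 e2.

(* S describes tight(G): it is reached by iterated folding from G and is tight;
   the quotient map G -> tight(G) sends an edge e to its ER S-class. *)
Definition folds_to (B : finType) (G : graph B) (S : fstate G) : Prop :=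
  clos_refl_trans _ (@fold_step B G) (init_state G) S /\ is_tight_state S.

(* Immersed loop in the quotient graph described by S, of length n > 0,
   given by representatives g 0, ..., g (n-1) (indices mod n). *)
Definition imm_loop (B : finType) (G : graph B) (S : fstate G) (n : nat)
    (g : nat -> E G) : Prop :=
  0 < n /\ forall i, i < n ->
    VR S (tgt G (g i)) (src G (g (i.+1 %% n))) /\
    ~ ER S (g (i.+1 %% n)) (inv G (g i)).

Definition in_core (B : finType) (G : graph B) (S : fstate G) (f : E G) : Prop :=
  exists n g, imm_loop S n g /\
    exists2 i, i < n & (ER S (g i) f \/ ER S (g i) (inv G f)).

Definition is_tight (B : finType) (G : graph B) : Prop :=
  is_tight_state (init_state G).

Definition is_core (B : finType) (G : graph B) : Prop :=
  (forall f : E G, in_core (init_state G) f) /\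
  (forall v : V G, exists e : E G, src G e = v).

Section Alpha.
Variables (B : finType) (G : graph B) (b : label B) (A : {set label B}).

Definition isb (c : label B) := (c == b) || (c == flip b).
Lemma isb_flip c : isb (flip c) = isb c.
Proof.
rewrite /isb; case: c => x s; case: b => y t; rewrite /flip /= !xpair_eqE.
by case: s; case: t; case: (x == y).
Qed.

(* epsilon(c) = (c \in A);  alpha(c) = b^{eps c} c b^{- eps c^{-1}} *)
Definition midok (e : E G) := ~~ isb (lab G e).
Definition preok (e : E G) := midok e && (lab G e \in A). (* alpha(lab e) starts with b *)
Definition keepok (e : E G) := isb (lab G e).

Lemma midok_inv e : midok e -> midok (inv G e).
Proof. by rewrite /midok lab_inv isb_flip. Qed.
Lemma keepok_inv e : keepok e -> keepok (inv G e).
Proof. by rewrite /keepok lab_inv isb_flip. Qed.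

(* vertices: old vertices, and one new vertex for each oriented edge e whose
   image path alpha(e) starts with b (the vertex after that b) *)
Definition aV : finType := (V G + {e : E G | preok e})%type.
(* edges: Mid e (the subedge of alpha(e) labeled lab e), Pre e (the initial
   b-edge of alpha(e)), PreI e = (Pre e)^{-1}, and Keep e for edges labeled b^{+-1} *)
Definition aE : finType :=
  ({e : E G | midok e} + {e : E G | preok e} + {e : E G | preok e}
   + {e : E G | keepok e})%type.

Definition Mid (e : E G) (h : midok e) : aE := inl (inl (inl (exist _ e h))).

Definition newv (e : E G) : aV :=
  match (insub e : option {x : E G | preok x}) with
  | Some x => inr x
  | None => inl (src G e)
  end.

Definition asrc (f : aE) : aV :=
  match f with
  | inl (inl (inl x)) => newv (val x)
  | inl (inl (inr x)) => inl (src G (val x))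
  | inl (inr x) => newv (val x)
  | inr x => inl (src G (val x))
  end.

Definition ainv (f : aE) : aE :=
  match f with
  | inl (inl (inl x)) => inl (inl (inl (exist _ (inv G (val x)) (midok_inv (valP x)))))
  | inl (inl (inr x)) => inl (inr x)
  | inl (inr x) => inl (inl (inr x))
  | inr x => inr (exist _ (inv G (val x)) (keepok_inv (valP x)))
  end.

Definition alab (f : aE) : label B :=
  match f with
  | inl (inl (inl x)) => lab G (val x)
  | inl (inl (inr _)) => b
  | inl (inr _) => flip b
  | inr x => lab G (val x)
  end.

Lemma ainvK : involutive ainv.
Proof.
case=> [[[x|x]|x]|x] //=.
  by congr (inl (inl (inl _))); apply: val_inj; rewrite /= invK.
by congr (inr _); apply: val_inj; rewrite /= invK.
Qed.

Lemma ainv_neq f : ainv f != f.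
Proof.
case: f => [[[x|x]|x]|x] //=; apply/eqP => -[] /(congr1 val) /= /eqP;
  by rewrite (negbTE (inv_neq _)).
Qed.

Lemma alab_inv f : alab (ainv f) = flip (alab f).
Proof. by case: f => [[[x|x]|x]|x] //=; rewrite ?lab_inv ?flipK. Qed.

Definition alpha_graph : graph B := @Graph B aV aE asrc ainv alab ainvK ainv_neq alab_inv.

End Alpha.

Arguments midok {B} G b e.
Arguments preok {B} G b A e.
Arguments Mid {B} G b A e h.

(* Main.v *)
Require Import Defs.
From Stdlib Require Import Relations.
From HB Require Import structures.
From mathcomp Require Import all_boot.
From mathcomp Require Import zify.
Set Implicit Arguments. Unset Strict Implicit. Unset Printing Implicit Defensive.

Definition equivR (T : Type) (R : T -> T -> Prop) :=
  (forall x, R x x) /\ (forall x y, R x y -> R y x) /\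
  (forall x y z, R x y -> R y z -> R x z).

Lemma merge_ker T U (R : T -> T -> Prop) (Q : U -> U -> Prop) (F : T -> U) a b :
  equivR Q -> (forall x y, R x y -> Q (F x) (F y)) -> Q (F a) (F b) ->
  forall x y, Defs.merge R a b x y -> Q (F x) (F y).
Proof.
move=> [Qr [Qs Qt]] HR Hab x y [h|[[h1 h2]|[h1 h2]]]; first exact: HR.
  exact: Qt (HR _ _ h1) (Qt _ _ _ Hab (HR _ _ h2)).
exact: Qt (HR _ _ h1) (Qt _ _ _ (Qs _ _ Hab) (HR _ _ h2)).
Qed.

Lemma merge_equiv T (R : T -> T -> Prop) a b : equivR R -> equivR (Defs.merge R a b).
Proof.
move=> [r [s t]]; split; [|split].
- by move=> x; left.
- move=> x y [h|[[h1 h2]|[h1 h2]]]; first by left; auto.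
    by right; right; split; auto.
  by right; left; split; auto.
- move=> x y z [h|[[h1 h2]|[h1 h2]]] [k|[[k1 k2]|[k1 k2]]];
  unfold Defs.merge; eauto 6.
Qed.

Section Gen.
Variables (B : finType) (H : graph B) (T : Type) (phi : V H -> T)
  (step : T -> label B -> T).
Hypothesis hstep : forall f, phi (tgt H f) = step (phi (src H f)) (lab H f).

Definition Inv (S : fstate H) :=
  equivR (VR S) /\ equivR (ER S) /\
   (forall f g, ER S f g -> VR S (src H f) (src H g)) /\
   (forall f g, ER S f g -> ER S (Defs.inv H f) (Defs.inv H g)) /\
   (forall f g, ER S f g -> lab H f = lab H g) /\
   (forall u v, VR S u v -> phi u = phi v).

Lemma eq_equiv U : equivR (@eq U).
Proof. split; [|split]; [by []|by move=> ? ? ->|by move=> ? ? ? -> ->]. Qed.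

Lemma Inv_init : Inv (init_state H).
Proof. split; first exact: eq_equiv. split; first exact: eq_equiv. by split; [|split; [|split]]=> x y /= ->. Qed.

Lemma Inv_fold S e1 e2 : Inv S -> VR S (src H e1) (src H e2) ->
  lab H e1 = lab H e2 -> Inv (fold_at S e1 e2).
Proof.
case=> [[Vr [Vs Vt]] [Ee [Esrc [Einv [Elab Ephi]]]]] hv hl.
have VE' := merge_equiv (tgt H e1) (tgt H e2) (conj Vr (conj Vs Vt)).
have EE1 := merge_equiv e1 e2 Ee.
have EE' := merge_equiv (Defs.inv H e1) (Defs.inv H e2) EE1.
split=> //; split=> //=; split; [|split; [|split]].
- apply: (merge_ker (Q := Defs.merge (VR S) (tgt H e1) (tgt H e2))) => //.
  + apply: (merge_ker (Q := Defs.merge (VR S) (tgt H e1) (tgt H e2))) => //.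
      by move=> x y /Esrc h; left.
    by left.
  + by right; left; split; apply: Vr.
- apply: (merge_ker (Q := Defs.merge (Defs.merge (ER S) e1 e2) (Defs.inv H e1) (Defs.inv H e2))) => //.
  + apply: (merge_ker (Q := Defs.merge (Defs.merge (ER S) e1 e2) (Defs.inv H e1) (Defs.inv H e2))) => //.
      by move=> x y /Einv h; left; left.
    by right; left; split; apply: EE1.1.
  + by rewrite !Defs.invK; left; right; left; split; apply: Ee.1.
- apply: (merge_ker (Q := @eq (label B))); first exact: eq_equiv.
    apply: (merge_ker (Q := @eq (label B))) => //; exact: eq_equiv.
  by rewrite !lab_inv hl.
- apply: (merge_ker (Q := @eq T)) => //; first exact: eq_equiv.
  by rewrite !hstep hl (Ephi _ _ hv).
Qed.

Lemma Inv_reach S : clos_refl_trans _ (@fold_step B H) (init_state H) S -> Inv S.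
Proof.
have: forall x y, clos_refl_trans _ (@fold_step B H) x y -> Inv x -> Inv y.
  move=> x y; elim=> //; last by eauto.
  by move=> ? ? [S' e1 e2 h1 h2 _] I; apply: Inv_fold.
move=> h hS; exact: h _ _ hS Inv_init.
Qed.
End Gen.

Section Red.
Variables (B : finType) (H : graph B) (S : fstate H).
Hypotheses (hV : equivR (VR S)) (hE : equivR (ER S))
  (Esrc : forall f g, ER S f g -> VR S (src H f) (src H g))
  (Einv : forall f g, ER S f g -> ER S (Defs.inv H f) (Defs.inv H g))
  (Elab : forall f g, ER S f g -> lab H f = lab H g)
  (htight : is_tight_state S).

Lemma VRr u : VR S u u. Proof. exact: hV.1. Qed.
Lemma VRs u v : VR S u v -> VR S v u. Proof. exact: hV.2.1. Qed.
Lemma VRt u v w : VR S u v -> VR S v w -> VR S u w. Proof. exact: hV.2.2. Qed.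

Lemma cancel_ER f g : VR S (tgt H f) (src H g) -> lab H g = flip (lab H f) ->
  ER S g (Defs.inv H f).
Proof. by move=> hv hl; apply: htight; [apply: VRs|rewrite lab_inv]. Qed.

Lemma ER_tgt f g : ER S f g -> VR S (tgt H f) (tgt H g).
Proof. by move=> /Einv /Esrc. Qed.

Fixpoint qpath (u : V H) (p : seq (E H)) (v : V H) : Prop :=
  match p with
  | [::] => VR S u v
  | f :: p' => VR S u (src H f) /\ qpath (tgt H f) p' v
  end.

Lemma qpath_VRl u u' p v : VR S u u' -> qpath u' p v -> qpath u p v.
Proof.
case: p => [|f p] /=; first exact: VRt.
by move=> h [h1 h2]; split=> //; apply: VRt h h1.
Qed.

Lemma qpath_cat u p w q v : qpath u p w -> qpath w q v -> qpath u (p ++ q) v.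
Proof.
elim: p u => [|f p IH] u /=; first by move=> h; apply: qpath_VRl.
by move=> [h1 h2] h3; split=> //; apply: IH h2 h3.
Qed.

Definition push (f : E H) (q : seq (E H)) :=
  match q with
  | g :: q' => if lab H g == flip (lab H f) then q' else f :: q
  | [::] => [:: f]
  end.

Definition red (p : seq (E H)) := foldr push [::] p.

Definition nrel : rel (E H) := fun f g => lab H g != flip (lab H f).

Lemma push_sorted f q : sorted nrel q -> sorted nrel (push f q).
Proof.
case: q => [|g q] //= hs; case: ifP => [_|/negbT h] /=.
  exact: path_sorted hs.
by rewrite /nrel h.
Qed.

Lemma red_sorted p : sorted nrel (red p).
Proof. by elim: p => //= f p IH; apply: push_sorted. Qed.

Lemma mem_push x f q : x \in push f q -> x \in f :: q.
Proof.
case: q => [|g q] //=; case: ifP => // _ h.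
by rewrite !inE h !orbT.
Qed.

Lemma mem_red x p : x \in red p -> x \in p.
Proof.
elim: p => //= f p IH /mem_push; rewrite !inE; case/orP=> [->//|/IH ->].
by rewrite orbT.
Qed.

Lemma red_qpath u p v : qpath u p v -> qpath u (red p) v.
Proof.
elim: p u => [|f p IH] u //= [h1 /IH h2].
move: h2; case: (red p) => [|g q] /=; first by move=> h; split.
case: ifP => [/eqP hl [h3 h4]|_ h]; last by split.
have he := cancel_ER h3 hl.
have h5 := ER_tgt he.
rewrite /tgt Defs.invK in h5.
apply: qpath_VRl h4; apply: VRt h1 (VRs h5).
Qed.

Definition cnt (l : label B) (p : seq (E H)) := count (fun f => lab H f == l) p.

Lemma push_cnt l f q :
  cnt l (push f q) + cnt (flip l) (f :: q) = cnt l (f :: q) + cnt (flip l) (push f q).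
Proof.
case: q => [|g q] //=; case: ifP => //= /eqP hl.
rewrite hl (inv_eq (@flipK B)) (inv_eq (@flipK B)) flipK.
rewrite /cnt; lia.
Qed.

Lemma red_cnt l p : cnt l (red p) + cnt (flip l) p = cnt l p + cnt (flip l) (red p).
Proof.
elim: p => //= f p IH.
have := push_cnt l f (red p); rewrite /cnt /= in IH *; lia.
Qed.

Fixpoint ppath (r : E H -> E H -> Prop) (x : E H) (p : seq (E H)) : Prop :=
  match p with
  | [::] => True
  | y :: p' => r x y /\ ppath r y p'
  end.

Lemma ppath_cat r x p q : ppath r x p -> ppath r (last x p) q -> ppath r x (p ++ q).
Proof. by elim: p x => //= y p IH x [h1 h2] h3; split=> //; apply: IH. Qed.

Definition adj (f g : E H) := VR S (tgt H f) (src H g) /\ ~ ER S g (Defs.inv H f).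

Lemma qp_ppath r m m' : qpath (tgt H m) r (src H m') -> path nrel m (r ++ [:: m']) ->
  ppath adj m (r ++ [:: m']).
Proof.
elim: r m => [|f r IH] m /=.
  move=> h /andP[hl _]; split=> //; split=> // /Elab; rewrite lab_inv => e.
  by rewrite /nrel e eqxx in hl.
move=> [h1 h2] /andP[hl hp]; split; last exact: IH.
split=> // /Elab; rewrite lab_inv => e.
by rewrite /nrel e eqxx in hl.
Qed.

Lemma ppath_nth r d x p : ppath r x p ->
  forall i, i < size p -> r (nth d (x :: p) i) (nth d p i).
Proof.
elim: p x => //= y p IH x [h1 h2] [|i] //= hi.
exact: IH.
Qed.

Lemma cyc_imm x T : ppath adj x (T ++ [:: x]) ->
  imm_loop S (size (x :: T)) (nth x (x :: T)).
Proof.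
move=> hp; split=> // i hi.
have hi' : i < size (T ++ [:: x]) by rewrite size_cat /= addn1.
have := ppath_nth x hp hi'.
have -> : nth x (x :: T ++ [:: x]) i = nth x (x :: T) i.
  by rewrite -cat_cons nth_cat hi.
have -> : nth x (T ++ [:: x]) i = nth x (x :: T) (i.+1 %% size (x :: T)).
  rewrite nth_cat /=; case: ltnP => hiT.
    by rewrite modn_small //= ltnS.
  have ei : i = size T by move: hi => /=; lia.
  by rewrite ei subnn modnn.
by [].
Qed.
End Red.

Lemma flip_neq (B : finType) (c : label B) : (flip c == c) = false.
Proof. by case: c => x s; rewrite /flip /= xpair_eqE eqxx /=; case: s. Qed.

Lemma isb_nflip (B : finType) (b l l' : label B) :
  isb b l -> ~~ isb b l' -> (l' == flip l) = false.
Proof.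
move=> h1 h2; apply/eqP=> e; move: h2; rewrite e isb_flip.
by rewrite h1.
Qed.

Section Alpha2.
Variables (B : finType) (G : graph B) (b : label B) (A : {set label B}).
Hypotheses (hbA : b \notin A) (hbA' : flip b \notin A) (hT : is_tight G).

Local Notation H := (alpha_graph G b A).

Lemma tightG e1 e2 : src G e1 = src G e2 -> lab G e1 = lab G e2 -> e1 = e2.
Proof. exact: hT. Qed.

Definition pe (u : V G) (l : label B) : option (E G) :=
  [pick k | (src G k == u) && (lab G k == l)].

Lemma pe_eq u l k : src G k = u -> lab G k = l -> pe u l = Some k.
Proof.
move=> h1 h2; rewrite /pe; case: pickP => [k' /andP[/eqP h1' /eqP h2']|/(_ k)].
  by congr Some; apply: tightG; rewrite ?h1 ?h1' ?h2 ?h2'.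
by rewrite h1 h2 !eqxx.
Qed.

Definition beta (v : V G) : V G * bool :=
  if pe v b is Some k then (tgt G k, false) else (v, true).

Definition unbeta (P : V G * bool) : V G :=
  if P.2 then P.1 else (if pe P.1 (flip b) is Some k then tgt G k else P.1).

Lemma unbetaK v : unbeta (beta v) = v.
Proof.
rewrite /beta {1}/pe; case: pickP => [k /andP[/eqP h1 /eqP h2]|_] //=.
rewrite /unbeta /= (@pe_eq _ _ (Defs.inv G k)) /tgt ?Defs.invK ?lab_inv ?h1 ?h2 //.
Qed.

Definition phi (x : aV G b A) : V G * bool :=
  match x with
  | inl v => (v, false)
  | inr y => beta (src G (val y))
  end.

Definition recv (P : V G * bool) (c : label B) : V G :=
  if c \in A then unbeta P else P.1.

Definition step (P : V G * bool) (l : label B) : V G * bool :=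
  if l == b then beta P.1
  else if l == flip b then (unbeta P, false)
  else match pe (recv P l) l with
       | Some x => phi (newv b A (Defs.inv G x))
       | None => P
       end.

Lemma phi_newv e : phi (newv b A e) =
  if preok G b A e then beta (src G e) else (src G e, false).
Proof.
rewrite /newv; case: insubP => [y hy ey|hn].
  by rewrite hy /= ey.
by rewrite (negbTE hn).
Qed.

Lemma rec_mid x : midok G b x ->
  pe (recv (phi (newv b A x)) (lab G x)) (lab G x) = Some x.
Proof.
move=> hx; rewrite phi_newv /preok hx /= /recv.
by case: (lab G x \in A); rewrite ?unbetaK; apply: pe_eq.
Qed.

Lemma hstep (f : E H) : phi (tgt H f) = step (phi (src H f)) (lab H f).
Proof.
case: f => [[[x|x]|x]|x] /=.
- have hx := valP x; rewrite /step.
  have hb : (lab G (val x) == b) = false.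
    by apply: negbTE; move: hx; rewrite /midok /isb negb_or => /andP[].
  have hb' : (lab G (val x) == flip b) = false.
    by apply: negbTE; move: hx; rewrite /midok /isb negb_or => /andP[].
  by rewrite hb hb' rec_mid.
- by rewrite phi_newv (valP x) /step eqxx.
- by rewrite /step flip_neq eqxx /= phi_newv; case: x => y hy /=; rewrite hy unbetaK.
- have hx := valP x; rewrite /keepok /isb in hx.
  rewrite /step; case/orP: hx => /eqP hl; rewrite hl ?flip_neq eqxx /=.
    by rewrite /beta (@pe_eq _ _ (val x)).
  by rewrite /unbeta /= (@pe_eq _ _ (val x)).
Qed.

Lemma part2 (S : fstate H) : @Inv _ H _ phi S -> forall (e1 e2 : E G)
  (h1 : midok G b e1) (h2 : midok G b e2),
  ER S (Mid G b A e1 h1) (Mid G b A e2 h2) -> e1 = e2.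
Proof.
move=> [_ [_ [Esrc [_ [Elab Ephi]]]]] e1 e2 h1 h2 he.
have hl := Elab _ _ he; have hv := Ephi _ _ (Esrc _ _ he).
simpl in hl, hv.
have := rec_mid h1; rewrite hv hl rec_mid //; by case.
Qed.
End Alpha2.

Lemma isb_nflip2 (B : finType) (b l l' : label B) :
  ~~ isb b l -> isb b l' -> (l' == flip l) = false.
Proof.
move=> h1 h2; apply/eqP=> e; move: h2; rewrite e isb_flip.
by rewrite (negbTE h1).
Qed.

Section Alpha3.
Variables (B : finType) (G : graph B) (b : label B) (A : {set label B}).
Hypotheses (hT : is_tight G).
Local Notation H := (alpha_graph G b A).
Variables (S : fstate H).
Hypotheses (hV : equivR (VR S)) (hE : equivR (ER S))
  (Esrc : forall f g, ER S f g -> VR S (src H f) (src H g))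
  (Einv : forall f g, ER S f g -> ER S (Defs.inv H f) (Defs.inv H g))
  (Elab : forall f g, ER S f g -> lab H f = lab H g)
  (htight : is_tight_state S).

Definition mid_list (e : E G) : seq (E H) :=
  if (insub e : option {x : E G | midok G b x}) is Some x
  then [:: (inl (inl (inl x)) : aE G b A)] else [::].
Definition pre_list (e : E G) : seq (E H) :=
  if (insub e : option {x : E G | preok G b A x}) is Some x
  then [:: (inl (inl (inr x)) : aE G b A)] else [::].
Definition post_list (e : E G) : seq (E H) :=
  if (insub (Defs.inv G e) : option {x : E G | preok G b A x}) is Some x
  then [:: (inl (inr x) : aE G b A)] else [::].
Definition keep_list (e : E G) : seq (E H) :=
  if (insub e : option {x : E G | keepok b x}) is Some x
  then [:: (inr x : aE G b A)] else [::].

Lemma mid_listE x (hx : midok G b x) : mid_list x = [:: Mid G b A x hx].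
Proof.
rewrite /mid_list; case: insubP => [y hy ey|hn]; last by rewrite hx in hn.
by rewrite /Mid; congr [:: inl (inl (inl _))]; apply: val_inj.
Qed.

Lemma keep_listE x (hx : keepok b x) : keep_list x = [:: (inr (exist _ x hx) : aE G b A)].
Proof.
rewrite /keep_list; case: insubP => [y hy ey|hn]; last by rewrite hx in hn.
by congr [:: inr _]; apply: val_inj.
Qed.

Lemma newv_nok e : ~~ preok G b A e -> newv b A e = inl (src G e).
Proof. by move=> hn; rewrite /newv insubN. Qed.

Lemma pre_qpath x : qpath S (inl (src G x)) (pre_list x) (newv b A x).
Proof.
rewrite /pre_list; case: insubP => [y hy ey|hn] /=.
  by split; rewrite ey; apply: VRr.
by rewrite newv_nok //; apply: VRr.
Qed.

Lemma post_qpath x : qpath S (newv b A (Defs.inv G x)) (post_list x) (inl (tgt G x)).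
Proof.
rewrite /post_list; case: insubP => [y hy ey|hn] /=.
  by split; rewrite ey; apply: VRr.
by rewrite newv_nok //; apply: VRr.
Qed.

Lemma all_isb_pre x : all (fun f => isb b (lab H f)) (pre_list x).
Proof. by rewrite /pre_list; case: insubP => //= *; rewrite /isb eqxx. Qed.
Lemma all_isb_post x : all (fun f => isb b (lab H f)) (post_list x).
Proof. by rewrite /post_list; case: insubP => //= *; rewrite /isb eqxx orbT. Qed.
Lemma all_isb_keep x : all (fun f => isb b (lab H f)) (keep_list x).
Proof. by rewrite /keep_list; case: insubP => //= y hy _; rewrite andbT; case: y {hy} => y hy. Qed.

Lemma cnt_pre x : cnt b (pre_list x) = preok G b A x /\ cnt (flip b) (pre_list x) = 0.
Proof.
rewrite /pre_list /cnt; case: insubP => [y hy ey|hn] /=.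
  by rewrite ?eqxx ?(eq_sym b) ?flip_neq hy.
by rewrite (negbTE hn).
Qed.

Lemma cnt_post x : cnt b (post_list x) = 0 /\
  cnt (flip b) (post_list x) = preok G b A (Defs.inv G x).
Proof.
rewrite /post_list /cnt; case: insubP => [y hy ey|hn] /=.
  by rewrite ?flip_neq ?eqxx hy.
by rewrite (negbTE hn).
Qed.

Lemma cnt_cat l (x y : seq (E H)) : cnt l (x ++ y) = cnt l x + cnt l y.
Proof. exact: count_cat. Qed.

Variables (n : nat) (h : nat -> E G).
Hypotheses (hn : 0 < n)
  (himm : forall t, tgt G (h t) = src G (h t.+1) /\ h t.+1 != Defs.inv G (h t))
  (hper : h n = h 0) (h0ok : midok G b (h 0)).

Lemma imm_lab t : lab G (h t.+1) != flip (lab G (h t)).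
Proof.
apply/eqP=> e; have [h1 h2] := himm t; move/eqP: h2; apply.
by apply: (tightG hT); [rewrite -h1|rewrite lab_inv].
Qed.

Lemma keep_same t : keepok b (h t) -> keepok b (h t.+1) -> lab G (h t.+1) = lab G (h t).
Proof.
move: (imm_lab t); rewrite /keepok /isb.
move=> hl /orP[/eqP e1|/eqP e1] /orP[/eqP e2|/eqP e2]; rewrite e1 e2 //;
  by move: hl; rewrite e1 e2 ?flipK eqxx.
Qed.

Definition seg p q := post_list (h p) ++
  flatten [seq keep_list (h t) | t <- iota p.+1 (q - p.+1)] ++ pre_list (h q).

Lemma keep_qpath s m : (forall i, i < m -> keepok b (h (s + i))) ->
  qpath S (inl (src G (h s))) (flatten [seq keep_list (h t) | t <- iota s m])
    (inl (src G (h (s + m)))).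
Proof.
elim: m s => [|m IH] s hk /=; first by rewrite addn0; apply: VRr.
have hk0 : keepok b (h s) by have := hk 0 isT; rewrite addn0.
rewrite keep_listE /=; split; first exact: VRr.
rewrite -/(tgt G (h s)) (himm s).1 -addSnnS; apply: IH => i hi.
by rewrite addSnnS; apply: hk.
Qed.

Lemma keeps_cnt l s m L : (forall i, i < m -> keepok b (h (s + i)) /\ lab G (h (s + i)) = L) ->
  cnt l (flatten [seq keep_list (h t) | t <- iota s m]) = m * (L == l).
Proof.
elim: m s => [|m IH] s hk //=.
have [hk0 hl0] : keepok b (h s) /\ lab G (h s) = L by have := hk 0 isT; rewrite addn0.
have IH' : cnt l (flatten [seq keep_list (h t) | t <- iota s.+1 m]) = m * (L == l).
  by apply: IH => i hi; rewrite addSnnS; apply: hk.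
rewrite keep_listE; rewrite /cnt /= in IH' *.
by rewrite IH' hl0 mulSn.
Qed.

Lemma seg_qpath p q (hp : midok G b (h p)) (hq : midok G b (h q)) : p < q ->
  (forall t, p < t < q -> ~~ midok G b (h t)) ->
  qpath S (tgt H (Mid G b A (h p) hp)) (seg p q) (src H (Mid G b A (h q) hq)).
Proof.
move=> hpq hbt; rewrite /seg /=.
apply: (qpath_cat hV (post_qpath _)).
rewrite (himm p).1.
apply: (qpath_cat hV); last exact: pre_qpath.
have -> : q = p.+1 + (q - p.+1) by rewrite subnKC.
rewrite addKn; apply: keep_qpath => i hi.
by rewrite /keepok -[isb _ _]negbK; apply: hbt; apply/andP; split; lia.
Qed.

Lemma seg_isb p q : all (fun f => isb b (lab H f)) (seg p q).
Proof.
rewrite /seg !all_cat all_isb_pre all_isb_post andbT /=.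
by elim: (iota _ _) => //= t l IH; rewrite all_cat all_isb_keep IH.
Qed.

Lemma empty_cond p q (hp : midok G b (h p)) (hq : midok G b (h q)) : p < q ->
  (forall t, p < t < q -> ~~ midok G b (h t)) ->
  red (seg p q) = [::] -> lab G (h q) != flip (lab G (h p)).
Proof.
move=> hpq hbt hr.
have := red_cnt b (seg p q); rewrite hr => hc.
case: (ltngtP q p.+1) => [|hq1|hq1]; first lia; last by rewrite hq1; apply: imm_lab.
set m := q - p.+1.
have hm : 0 < m by rewrite /m; lia.
set L := lab G (h p.+1).
have hL : forall i, i < m -> keepok b (h (p.+1 + i)) /\ lab G (h (p.+1 + i)) = L.
  have hk : forall i, i < m -> keepok b (h (p.+1 + i)).
    by move=> i hi; rewrite /keepok -[isb _ _]negbK; apply: hbt; apply/andP; split; lia.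
  elim=> [|i IH] hi; first by split; [exact: hk 0 hi|rewrite addn0].
  split; first exact: hk.
  have [k1 l1] := IH (ltnW hi).
  by rewrite addnS keep_same // -addnS; exact: hk.
move: hc; rewrite /seg !cnt_cat.
rewrite (keeps_cnt b hL) (keeps_cnt (flip b) hL).
have [c1 c2] := cnt_post (h p); have [c3 c4] := cnt_pre (h q).
rewrite c1 c2 c3 c4.
have hLb : isb b L by have [k0 l0] := hL 0 hm; rewrite /keepok l0 in k0.
move=> hc; apply/negP => /eqP e.
have ep : preok G b A (h q) = preok G b A (Defs.inv G (h p)).
  by rewrite /preok hq midok_inv //= lab_inv e.
move: hc; rewrite ep; move: hLb; rewrite /isb => /orP[/eqP ->|/eqP ->];
  rewrite ?eqxx ?flip_neq ?(eq_sym b) ?flip_neq /cnt /= ?muln0 ?muln1; lia.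
Qed.

Lemma block_ok p q (hp : midok G b (h p)) (hq : midok G b (h q)) : p < q ->
  (forall t, p < t < q -> ~~ midok G b (h t)) ->
  ppath (@adj _ _ S) (Mid G b A (h p) hp) (red (seg p q) ++ [:: Mid G b A (h q) hq]).
Proof.
move=> hpq hbt; apply: (qp_ppath Elab).
  exact: (red_qpath hV Esrc Einv htight (seg_qpath hp hq hpq hbt)).
have hall : forall f, f \in red (seg p q) -> isb b (lab H f).
  by move=> f /mem_red; apply: (allP (seg_isb p q)).
rewrite cat_path; case E0: (red (seg p q)) => [|f r] /=.
  by rewrite /nrel andbT; apply: empty_cond.
have hs := red_sorted (seg p q); rewrite E0 /= in hs.
have hf : isb b (lab H f) by apply: hall; rewrite E0 mem_head.
have hl : isb b (lab H (last f r)).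
  apply: hall; rewrite E0.
  by case: r {hs E0} => [|y r] /=; rewrite ?mem_head // inE mem_last orbT.
rewrite hs /nrel (isb_nflip2 (b:=b)) // andbT /=.
by rewrite (isb_nflip (b:=b)).
Qed.

Lemma hnok : midok G b (h n). Proof. by rewrite hper. Qed.

Lemma nxt_ex p : exists q, ((p < q) && midok G b (h q)) || (q == n).
Proof. by exists n; rewrite eqxx orbT. Qed.

Definition nxt p := ex_minn (nxt_ex p).

Lemma nxt_spec p : p < n -> [/\ p < nxt p, nxt p <= n, midok G b (h (nxt p)) &
  forall t, p < t < nxt p -> ~~ midok G b (h t)].
Proof.
move=> hpn; rewrite /nxt; case: ex_minnP => m Pm minm.
have hmn : m <= n by apply: minm; rewrite eqxx orbT.
have [hpm hmm] : p < m /\ midok G b (h m).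
  by case/orP: Pm => [/andP[]//|/eqP ->]; split=> //; apply: hnok.
split=> // t /andP[h1 h2]; apply/negP => ht.
by have := minm t; rewrite h1 ht /= => /(_ isT); lia.
Qed.

Fixpoint blk (k p : nat) : seq (E H) :=
  if k is k'.+1 then
    (if p < n then mid_list (h p) ++ red (seg p (nxt p)) ++ blk k' (nxt p) else [::])
  else [::].

Lemma blk_ok k : forall p (hp : midok G b (h p)), n - p <= k -> p < n ->
  exists T, blk k p = Mid G b A (h p) hp :: T /\
    ppath (@adj _ _ S) (Mid G b A (h p) hp) (T ++ [:: Mid G b A (h n) hnok]).
Proof.
elim: k => [|k IH] p hp hk hpn; first lia.
have [h1 h2 h3 h4] := nxt_spec hpn.
rewrite /= hpn (mid_listE hp) /=.
case: (ltngtP (nxt p) n) => [hq|hq|hq]; last 2 first.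
- lia.
- exists (red (seg p (nxt p)) ++ blk k (nxt p)); split=> //.
  have -> : blk k (nxt p) = [::] by case: k {IH hk} => //= k; rewrite hq ltnn.
  rewrite cats0; move: h3 (block_ok hp h3 h1 h4); rewrite hq => h3.
  by rewrite (bool_irrelevance h3 hnok).
have [T [eT pT]] := IH (nxt p) h3 ltac:(lia) hq.
exists (red (seg p (nxt p)) ++ blk k (nxt p)); split=> //.
rewrite eT -catA cat_cons -cat1s catA.
apply: ppath_cat; first exact: block_ok.
by rewrite last_cat /=.
Qed.

Lemma loop_exists : exists T,
  imm_loop S (size (Mid G b A (h 0) h0ok :: T)) (nth (Mid G b A (h 0) h0ok) (Mid G b A (h 0) h0ok :: T)).
Proof.
have [T [_ pT]] := blk_ok (k := n) h0ok (leq_subr 0 n) hn.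
have e : Mid G b A (h n) hnok = Mid G b A (h 0) h0ok.
  by rewrite /Mid; congr (inl (inl (inl _))); apply: val_inj; exact: hper.
rewrite e in pT; exists T; exact: cyc_imm pT.
Qed.
End Alpha3.

Theorem lemma9p8 (B : finType) (G : graph B) (b : label B) (A : {set label B})
    (hbA : b \notin A) (hbA' : flip b \notin A)
    (hT : is_tight G) (hC : is_core G)
    (S : fstate (alpha_graph G b A)) (hS : folds_to S) :
  (forall (e : E G) (he : midok G b e), in_core S (Mid G b A e he)) /\
  (forall (e1 e2 : E G) (h1 : midok G b e1) (h2 : midok G b e2),
      ER S (Mid G b A e1 h1) (Mid G b A e2 h2) -> e1 = e2) /\
  (forall f : E (alpha_graph G b A),
      in_core S f -> ~~ isb b (lab (alpha_graph G b A) f) ->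
      exists (e : E G) (he : midok G b e), ER S f (Mid G b A e he)).
Proof.
have I := Inv_reach (hstep hT) hS.1.
have I' := I.
case: I' => [hV [hE [Esrc [Einv [Elab _]]]]].
split; [|split].
- move=> e he.
  have [n [g [[hn himm] [i hi hge]]]] := hC.1 e.
  pose h t := g ((i + t) %% n).
  have himm' : forall t, tgt G (h t) = src G (h t.+1) /\ h t.+1 != Defs.inv G (h t).
    move=> t; have [h1 h2] := himm _ (ltn_pmod (i + t) hn).
    have et : ((i + t) %% n).+1 %% n = (i + t.+1) %% n.
      by rewrite -addn1 modnDml; congr (_ %% _); lia.
    rewrite et in h1 h2; split; first exact: h1.
    by apply/eqP.
  have hper : h n = h 0 by rewrite /h modnDr addn0.
  have h0e : h 0 = e \/ h 0 = Defs.inv G e.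
    by rewrite /h addn0 modn_small.
  have h0ok : midok G b (h 0).
    by case: h0e => ->; rewrite ?he // midok_inv.
  have [T hl] := loop_exists hT hV Esrc Einv Elab hS.2 hn himm' hper h0ok.
  exists (size (Mid G b A (h 0) h0ok :: T)), (nth (Mid G b A (h 0) h0ok) (Mid G b A (h 0) h0ok :: T)).
  split=> //; exists 0 => //=.
  case: h0e => e0; [left|right].
  + have -> : Mid G b A (h 0) h0ok = Mid G b A e he.
      by rewrite /Mid; congr (inl (inl (inl _))); apply: val_inj.
    exact: hE.1.
  + have -> : Mid G b A (h 0) h0ok = Defs.inv (alpha_graph G b A) (Mid G b A e he).
      by rewrite /Mid /=; congr (inl (inl (inl _))); apply: val_inj.
    exact: hE.1.
- move=> e1 e2 h1 h2; apply: (part2 hT I).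
- move=> f _; case: f => [[[x|x]|x]|x] /=.
  + move=> _; case: x => e he; exists e, he; exact: hE.1.
  + by rewrite /isb eqxx.
  + by rewrite /isb eqxx orbT.
  + case: x => e he /= hn; exfalso; by rewrite /keepok (negbTE hn) in he.
Qed.
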